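(* Let $n$ be a positive integer, $f:\mathbb{Z}_n\to\mathbb C$, $T_f=\max_{A\in\mathcal A_n}|f(A)|$, $m\le n$ a positive integer and $M=\{0,1,\dots,m-1\}\subseteq\mathbb{Z}_n$. Then \[\sum_{a\in\mathbb{Z}_n}\sum_{b\in\mathbb{Z}_n}|f(a+bM)|^2\le n^2T_f^2+\sum_{1\le k<m:\ k\mid n}\frac{m^2\phi(k)}{k}G_f(n/k).\]
   Context: An arithmetic progression in $\mathbb{Z}_n$ is a set $\{a+kd: 0\le k<l\}$ with $a,d\in\mathbb{Z}_n$ and $l$ an integer with $0\le l\le n/\gcd(n,d)$ (with $\gcd(0,n)=n$); $\mathcal A_n$ is the family of all of them. For a set $A$, $f(A)=\sum_{x\in A}f(x)$; for $a,b\in\mathbb{Z}_n$, $f(a+bM)=\sum_{x\in M}f(a+bx)$ (multiset sum). For a positive divisor $r$ of $n$ and $a\in\mathbb{Z}_n$, $g_f(a,r)=\sum_{x\in\mathbb{Z}_n:\,x=a+jr\text{ for some }j\in\mathbb{Z}_n}f(x)$ and $G_f(r)=\sum_{a=0}^{r-1}|g_f(a,r)|^2$. $\phi$ is Euler's totient function. *)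

(* Defs.v *)
From mathcomp Require Import all_boot all_order all_algebra.
Set Implicit Arguments. Unset Strict Implicit. Unset Printing Implicit Defensive.
Import Order.TTheory GRing.Theory Num.Theory.
Local Open Scope ring_scope.

(* Z_N with N = n.+1 (positive modulus) is modelled by 'I_n.+1;
   zn n k is the residue of the natural number k in Z_{n+1}. *)
Definition zn (n k : nat) : 'I_n.+1 := inZp k.

Definition apset (n : nat) (a d : 'I_n.+1) (l : nat) : {set 'I_n.+1} :=
  [set x : 'I_n.+1 | [exists k : 'I_l, x == zn n (a + k * d)]].

(* A is in the family A_{n+1}: A = {a + kd : 0<=k<l} with 0 <= l <= N/gcd(N,d)
   (gcdn N 0 = N). *)
Definition isAP (n : nat) (A : {set 'I_n.+1}) : bool :=
  [exists a : 'I_n.+1, exists d : 'I_n.+1, exists l : 'I_n.+2,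
     (l <= n.+1 %/ gcdn n.+1 d)%N && (A == apset a d l)].

Section Defs.
Variable C : numClosedFieldType.

Definition fset_sum (n : nat) (f : 'I_n.+1 -> C) (A : {set 'I_n.+1}) : C :=
  \sum_(x in A) f x.

Definition Tf (n : nat) (f : 'I_n.+1 -> C) : C :=
  \big[Num.max/0]_(A : {set 'I_n.+1} | isAP A) `|fset_sum f A|.

(* f(a + bM) with M = {0,...,m-1} (multiset sum) *)
Definition fshift (n : nat) (f : 'I_n.+1 -> C) (m : nat) (a b : 'I_n.+1) : C :=
  \sum_(x < m) f (zn n (a + b * x)).

Definition gf (n : nat) (f : 'I_n.+1 -> C) (a : 'I_n.+1) (r : nat) : C :=
  \sum_(x : 'I_n.+1 | [exists j : 'I_n.+1, x == zn n (a + j * r)]) f x.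

Definition Gf (n : nat) (f : 'I_n.+1 -> C) (r : nat) : C :=
  \sum_(a < r) `|gf f (zn n a) r| ^+ 2.
End Defs.

(* Main.v *)
Require Import Defs.
From mathcomp Require Import all_boot all_order all_algebra.
From mathcomp Require Import zify ring.
Import Order.TTheory GRing.Theory Num.Theory.

Lemma coprime_divg N b : 0 < N -> coprime (N %/ gcdn N b) (b %/ gcdn N b).
Proof.
move=> N0; set d := gcdn N b.
have d0 : 0 < d by rewrite gcdn_gt0 N0.
rewrite /coprime.
rewrite -(eqn_pmul2r d0) muln_gcdl !divnK ?dvdn_gcdl ?dvdn_gcdr //.
by rewrite mul1n.
Qed.

Lemma ap_inj N a b i j : 0 < N ->
  (a + b * i) %% N = (a + b * j) %% N ->
  i < N %/ gcdn N b -> j < N %/ gcdn N b -> i = j.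
Proof.
move=> N0 e.
have key : forall i j, i <= j -> (a + b * i) %% N = (a + b * j) %% N ->
    j < N %/ gcdn N b -> i = j.
  move=> i0 j0 ij e0 jl.
  set d := gcdn N b.
  have d0 : 0 < d by rewrite gcdn_gt0 N0.
  have eN : N = N %/ d * d by rewrite divnK ?dvdn_gcdl.
  have eb : b = b %/ d * d by rewrite divnK ?dvdn_gcdr.
  move/eqP: e0; rewrite eqn_modDl eq_sym eqn_mod_dvd ?leq_mul2l ?ij ?orbT //.
  rewrite -mulnBr {1}eN {1}eb mulnAC dvdn_pmul2r // mulnC Gauss_dvdl; last first.
    by rewrite /d coprime_divg.
  move=> dv.
  have : j0 - i0 < N %/ d by apply: leq_ltn_trans (leq_subr _ _) jl.
  case E: (j0 - i0) => [|p] lt.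
    by apply/eqP; rewrite eqn_leq ij -subn_eq0 E.
  by move: dv; rewrite E => /(dvdn_leq (ltn0Sn p)); rewrite leqNgt lt.
move=> il jl.
case: (leqP i j) => ij; first exact: key.
by apply/esym/key => //; apply: ltnW.
Qed.
Lemma card_coprime k : #|[set c : 'I_k | coprime k c]| = totient k.
Proof.
rewrite totient_count_coprime big_mkord -sum1_card big_mkcond /=.
by apply: eq_bigr => i _; rewrite inE; case: (coprime k i).
Qed.

Lemma count_le N k' : 0 < N -> k'.+1 %| N ->
  #|[set b : 'I_N | N %/ gcdn N b == k'.+1]| <= totient k'.+1.
Proof.
move=> N0 kN; set A := [set b : 'I_N | _].
set d0 := N %/ k'.+1.
have Ak : forall b : 'I_N, b \in A -> gcdn N b = d0.
  move=> b; rewrite inE => /eqP e.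
  have g0 : 0 < gcdn N b by rewrite gcdn_gt0 N0.
  have : N %/ gcdn N b * gcdn N b = N by rewrite divnK ?dvdn_gcdl.
  by rewrite e /d0 => hh; rewrite -[in RHS]hh mulKn.
have d00 : 0 < d0 by rewrite divn_gt0 // dvdn_leq.
have ltk : forall b : 'I_N, b %/ d0 <= k'.
  by move=> b; rewrite -ltnS ltn_divLR // /d0 mulnC divnK.
set h := fun b : 'I_N => (inord (b %/ d0) : 'I_k'.+1).
have inj : {in A &, injective h}.
  move=> x y xA yA /(congr1 val); rewrite /h /= !inordK ?ltnS ?ltk // => e.
  apply: val_inj => /=.
  rewrite -(divnK (dvdn_gcdr N x)) -(divnK (dvdn_gcdr N y)) !Ak //.
  by rewrite e.
rewrite -(card_in_imset inj) -card_coprime; apply: subset_leq_card.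
apply/subsetP => c /imsetP [b bA ->]; rewrite inE /h inordK ?ltnS ?ltk //.
have e : N %/ d0 = k'.+1 by move: (bA); rewrite inE (Ak _ bA) => /eqP.
by have := @coprime_divg N b N0; rewrite Ak // e.
Qed.

Local Open Scope ring_scope.
Section Aux.
Variable C : numClosedFieldType.
Variable n : nat.
Variable f : 'I_n.+1 -> C.
Local Notation N := n.+1.
Definition F (t : nat) : C := f (zn n t).

Lemma val_zn t : (zn n t : nat) = (t %% N)%N. Proof. by []. Qed.

Lemma zn_mod t : zn n (t %% N)%N = zn n t.
Proof. by apply: val_inj => /=; rewrite modn_mod. Qed.

Lemma zn_ord (a : 'I_N) : zn n a = a.
Proof. by apply: val_inj => /=; rewrite modn_small. Qed.

Lemma Fmod t : F (t %% N)%N = F t. Proof. by rewrite /F zn_mod. Qed.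

Lemma Fper t c : (N %| c)%N -> F (t + c) = F t.
Proof.
move/dvdnP=> [u ->]; rewrite -[LHS]Fmod -[RHS]Fmod; congr F.
by rewrite addnC modnMDl.
Qed.

Lemma sum_shift (H : nat -> C) c : (forall t, H (t %% N)%N = H t) ->
  \sum_(a < N) H (a + c)%N = \sum_(a < N) H a.
Proof.
move=> HP.
have inj : injective (fun a : 'I_N => zn n (a + c)).
  move=> x y /(congr1 val) /= /eqP.
  rewrite eqn_modDr !modn_small // => /eqP xy; exact: val_inj.
rewrite [RHS](reindex_inj inj) /=; apply: eq_bigr => i _.
by rewrite /= HP.
Qed.

Lemma maxge (x y : C) : x <= Num.max x y.
Proof. by rewrite /Num.max /Order.max; case: ifP => [/ltW|]. Qed.

Lemma maxge2 (u w : C) : 0 <= u -> 0 <= w -> w <= Num.max u w.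
Proof.
move=> u0 w0; rewrite /Num.max /Order.max; case: ifP => [/ltW //|].
by move/negbT; rewrite -real_leNgt ?ger0_real.
Qed.

Lemma bigmax_ge0 (I : Type) (r : seq I) (P : pred I) (v : I -> C) :
  (forall j, 0 <= v j) -> 0 <= \big[Num.max/0]_(j <- r | P j) v j.
Proof.
move=> v0; elim: r => [|x r IH]; first by rewrite big_nil.
rewrite big_cons; case: ifP => // _; exact: le_trans (v0 x) (maxge _ _).
Qed.

Lemma bigmax_ge (I : eqType) (r : seq I) (P : pred I) (v : I -> C) i :
  (forall j, 0 <= v j) -> i \in r -> P i ->
  v i <= \big[Num.max/0]_(j <- r | P j) v j.
Proof.
move=> v0; elim: r => [|x r IH] //; rewrite inE big_cons => /orP [/eqP -> ->|ir Pi].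
  exact: maxge.
have h := IH ir Pi; case: ifP => // _.
apply: (le_trans h); apply: maxge2 => //; exact: bigmax_ge0.
Qed.

Lemma Tf_ge (A : {set 'I_N}) : isAP A -> `|fset_sum f A| <= Tf f.
Proof.
move=> hA; rewrite /Tf; apply: (@bigmax_ge _ _ _ (fun A => `|fset_sum f A|)) => //; exact: mem_index_enum.
Qed.

Lemma ap_bound (a b : 'I_N) l : (l <= N %/ gcdn N b)%N ->
  `|\sum_(x < l) F (a + b * x)%N| <= Tf f.
Proof.
move=> hl.
have lN : (l < N.+1)%N by apply: leq_ltn_trans hl _; rewrite ltnS leq_div.
have E : apset a b l = [set zn n (a + x * b)%N | x : 'I_l].
  apply/setP => x; rewrite inE; apply/existsP/imsetP.
    by move=> [k /eqP ->]; exists k.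
  by move=> [k _ ->]; exists k.
have : isAP (apset a b l).
  by apply/existsP; exists a; apply/existsP; exists b; apply/existsP;
     exists (Ordinal lN); rewrite /= hl eqxx.
move/Tf_ge; rewrite /fset_sum E big_imset /=.
  move=> h; suff -> : \sum_(x < l) F (a + b * x)%N = \sum_(i in 'I_l) f (zn n (a + i * b)%N) by [].
  by apply: eq_bigr => i _; rewrite /F mulnC.
move=> x y _ _ /(congr1 val) /=; rewrite ![(_ * b)%N]mulnC => e.
apply: val_inj; apply: (@ap_inj N a b x y (ltn0Sn n) e) => //; exact: leq_trans (ltn_ord _) hl.
Qed.

Lemma zn_red u v w : zn n (u + (v %% N) * w)%N = zn n (u + v * w)%N.
Proof. by apply: val_inj => /=; rewrite -modnDmr modnMml modnDmr. Qed.

Lemma sum_modd (H : nat -> C) K D :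
  \sum_(a < K * D) H (a %% D)%N = (\sum_(a < D) H a) *+ K.
Proof.
elim: K => [|K IH]; first by rewrite mul0n big_ord0.
rewrite mulSn big_split_ord /= mulrS; congr (_ + _).
  by apply: eq_bigr => i _; rewrite modn_small.
by rewrite -IH; apply: eq_bigr => i _; rewrite modnDl.
Qed.

Lemma expand (I : finType) (u v : I -> C) q :
  \sum_i `|u i *+ q + v i| ^+ 2 = (q ^ 2)%:R * \sum_i `|u i| ^+ 2
    + q%:R * ((\sum_i u i * (v i)^*) + (\sum_i u i * (v i)^*)^*)
    + \sum_i `|v i| ^+ 2.
Proof.
rewrite rmorph_sum mulrDr !mulr_sumr -!big_split; apply: eq_bigr => i _ /=.
have cD : forall a b : C, (a + b)^* = a^* + b^* by move=> a b; rewrite rmorphD.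
have cMn : forall a : C, (a *+ q)^* = a^* *+ q by move=> a; rewrite rmorphMn.
have cM : forall a b : C, (a * b)^* = a^* * b^* by move=> a b; rewrite rmorphM.
rewrite -[u i *+ q]mulr_natl !normCK !cD !cM rmorph_nat conjCK natrX.
ring.
Qed.

Lemma sq_le (x y : C) : 0 <= x -> x <= y -> x ^+ 2 <= y ^+ 2.
Proof. by move=> x0 xy; rewrite !expr2; apply: ler_pM. Qed.

Section FixB.
Variable b : 'I_N.
Local Notation d := (gcdn N b).
Local Notation k := (N %/ gcdn N b)%N.

Lemma d_gt0 : (0 < d)%N. Proof. by rewrite gcdn_gt0. Qed.
Lemma eNkd : (k * d)%N = N. Proof. by rewrite divnK ?dvdn_gcdl. Qed.
Lemma k_gt0 : (0 < k)%N.
Proof. by rewrite divn_gt0 ?d_gt0 // dvdn_leq ?dvdn_gcdl. Qed.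
Lemma ebd : (b %/ d * d)%N = b. Proof. by rewrite divnK ?dvdn_gcdr. Qed.
Lemma dvd_bk : (N %| b * k)%N.
Proof. by rewrite -[b in (b * _)%N]ebd mulnAC -mulnA eNkd dvdn_mull. Qed.

Definition g (t : nat) : C := \sum_(j < k) F (t + b * j)%N.

Lemma g_step t : g (t + b)%N = g t.
Proof.
have hk : k = k.-1.+1 by rewrite prednK // k_gt0.
have hb := dvd_bk; rewrite hk in hb.
rewrite /g hk big_ord_recr [RHS]big_ord_recl /= [RHS]addrC; congr (_ + _).
  by apply: eq_bigr => i _; rewrite /bump /= add1n mulnSr addnAC addnA.
by rewrite muln0 addn0 -addnA [(b + _)%N]addnC -mulnSr Fper.
Qed.

Lemma g_shift t x : g (t + b * x)%N = g t.
Proof.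
elim: x => [|x IH]; first by rewrite muln0 addn0.
by rewrite mulnSr addnA g_step.
Qed.

Lemma g_mod t : g (t %% N)%N = g t.
Proof. by apply: eq_bigr => j _; rewrite -Fmod -[RHS]Fmod modnDml. Qed.

Lemma split_sum t q L :
  \sum_(x < q * k + L) F (t + b * x)%N = g t *+ q + \sum_(x < L) F (t + b * x)%N.
Proof.
elim: q => [|q IH]; first by rewrite mul0n add0n mulr0n add0r.
rewrite mulSn -addnA big_split_ord /= mulrS -addrA; congr (_ + _).
rewrite -IH; apply: eq_bigr => i _ /=.
by rewrite mulnDr addnA addnAC Fper ?dvd_bk.
Qed.

Lemma g_gf (a : 'I_N) : g a = gf f a d.
Proof.
set h := fun j : 'I_k => zn n (a + b * j)%N.
have inj : injective h.
  move=> x y /(congr1 val) /= e; apply: val_inj.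
  exact: (@ap_inj N a b x y (ltn0Sn n) e (ltn_ord x) (ltn_ord y)).
set P := [set x : 'I_N | [exists j : 'I_N, x == zn n (a + j * d)%N]].
have E : P = [set h j | j : 'I_k].
  apply/eqP; rewrite eq_sym eqEcard; apply/andP; split.
    apply/subsetP => x /imsetP [j _ ->]; rewrite inE; apply/existsP.
    exists (zn n (j * (b %/ d))%N); rewrite /h /= zn_red -mulnA ebd mulnC.
    by [].
  rewrite card_imset // ?cardsT card_ord.
  have sub : P \subset [set zn n (a + (j : nat) * d)%N | j : 'I_k].
    apply/subsetP => x; rewrite inE => /existsP [j /eqP ->].
    apply/imsetP; exists (Ordinal (ltn_pmod j k_gt0)) => //=.
    apply: val_inj => /=; rewrite muln_modl eNkd modnDmr; by [].
  apply: leq_trans (subset_leq_card sub) _.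
  by apply: leq_trans (leq_imset_card _ _) _; rewrite ?cardsT card_ord.
rewrite /gf (eq_bigl (fun x => x \in P)); last by move=> x; rewrite inE.
rewrite E big_imset; last by move=> x y _ _; apply: inj.
by [].
Qed.

Lemma gf_mod (a : 'I_N) : gf f a d = gf f (zn n (a %% d)) d.
Proof.
have ad : (a %% d < N)%N.
  by apply: leq_trans (ltn_pmod _ d_gt0) _; rewrite dvdn_leq ?dvdn_gcdl.
have vz : (zn n (a %% d) : nat) = (a %% d)%N by rewrite /= modn_small.
apply: eq_bigl => x; rewrite vz; apply/existsP/existsP => [[j /eqP ->]|[j /eqP ->]].
  exists (zn n (a %/ d + j)%N); apply/eqP; rewrite /= zn_red mulnDl addnA.
  by rewrite [(a %% _ + _)%N]addnC -divn_eq.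
have qk : (a %/ d <= j + k)%N.
  apply: leq_trans (leq_addl _ _); apply: ltnW; rewrite ltn_divLR ?d_gt0 //.
  by rewrite eNkd.
exists (zn n (j + k - a %/ d)%N); apply/eqP; rewrite /= zn_red.
apply: val_inj => /=.
have -> : (a + (j + k - a %/ d) * d = a %% d + j * d + N)%N.
  transitivity (a %% d + j * d + k * d)%N; last by rewrite eNkd.
  rewrite -addnA -mulnDl {1}(divn_eq a d) addnAC -mulnDl subnKC //.
  by rewrite addnC.
by rewrite modnDr.
Qed.

Lemma sum_g2 : \sum_(a < N) `|g a| ^+ 2 = k%:R * Gf f d.
Proof.
have := sum_modd (fun a => `|gf f (zn n a) d| ^+ 2) k d; rewrite eNkd => h.
rewrite /Gf mulr_natl -h; apply: eq_bigr => a _.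
by rewrite g_gf gf_mod.
Qed.

Definition Y := \sum_(a < N) g a * (F a)^*.

Lemma cross L :
  \sum_(a < N) g a * (\sum_(x < L) F (a + b * x)%N)^* = Y *+ L.
Proof.
under eq_bigr do rewrite rmorph_sum mulr_sumr.
rewrite exchange_big /= -[L in Y *+ L]card_ord -sumr_const.
apply: eq_bigr => x _.
rewrite /Y -(sum_shift (fun t => g t * (F t)^*) (b * x)); last first.
  by move=> t; rewrite g_mod Fmod.
by apply: eq_bigr => a _; rewrite g_shift.
Qed.

Lemma Y_eq : Y = Gf f d.
Proof.
have := sum_g2.
have -> : \sum_(a < N) `|g a| ^+ 2 = Y *+ k.
  rewrite -cross; apply: eq_bigr => a _; by rewrite normCK.
rewrite -mulr_natr mulrC => /mulfI; apply.
by rewrite pnatr_eq0 -lt0n k_gt0.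
Qed.

Lemma Gf_ge0 r : 0 <= Gf f r.
Proof. by apply: sumr_ge0 => i _; rewrite exprn_ge0. Qed.

Lemma sum_T (u : 'I_N -> C) : (forall a, `|u a| <= Tf f) ->
  \sum_(a < N) `|u a| ^+ 2 <= N%:R * Tf f ^+ 2.
Proof.
move=> h; rewrite -[X in X%:R * _]card_ord mulr_natl -sumr_const.
by apply: ler_sum => a _; apply: sq_le.
Qed.

Lemma per_b m :
  \sum_(a < N) `|fshift f m a b| ^+ 2 <=
  N%:R * Tf f ^+ 2 + (if (k < m)%N then (m ^ 2)%:R / k%:R * Gf f d else 0).
Proof.
case: ltnP => km; last first.
  rewrite addr0; apply: sum_T => a; exact: ap_bound.
set q := (m %/ k)%N; set s := (m %% k)%N.
have eS : forall a : 'I_N,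
    fshift f m a b = g a *+ q + \sum_(x < s) F (a + b * x)%N.
  by move=> a; have := split_sum a q s; rewrite /q /s -divn_eq.
rewrite (eq_bigr _ (fun a _ => congr1 (fun z => `|z| ^+ 2) (eS a))).
rewrite (@expand 'I_N (fun i : 'I_N => g i) (fun i : 'I_N => \sum_(x < s) F (i + b * x)%N) q) /=.
rewrite cross Y_eq.
have G0 := Gf_ge0 d.
have -> : (Gf f d *+ s)^* = Gf f d *+ s by rewrite geC0_conj // mulrn_wge0.
have -> : \sum_(a < N) `|g a| ^+ 2 = k%:R * Gf f d.
  by rewrite sum_g2.
rewrite addrC lerD //.
  apply: sum_T => a; apply: ap_bound; apply: ltnW; exact: ltn_pmod k_gt0.
have k0 : k%:R != 0 :> C by rewrite pnatr_eq0 -lt0n k_gt0.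
have em : (m ^ 2)%:R = (q%:R * k%:R + s%:R) ^+ 2 :> C.
  by rewrite {1}(divn_eq m k) natrX natrD natrM.
rewrite -subr_ge0 em.
move: k0 G0; set G := Gf f d; set K := (k%:R : C) => k0 G0.
suff -> : (q%:R * K + s%:R) ^+ 2 / K * G -
    ((q ^ 2)%:R * (K * G) + q%:R * (G *+ s + G *+ s)) = s%:R ^+ 2 / K * G.
  by rewrite mulr_ge0 // divr_ge0 // exprn_ge0.
rewrite -[G *+ s]mulr_natr natrX; field; exact: k0.
Qed.

Lemma div_kb : (N %/ (N %/ gcdn N b))%N = gcdn N b.
Proof.
have := eNkd => e; rewrite -[X in (X %/ _)%N = _]e mulKn //; exact: k_gt0.
Qed.

End FixB.
Lemma kb_dvd (b : nat) : (N %/ gcdn N b %| N)%N.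
Proof. by rewrite dvdn_div ?dvdn_gcdl. Qed.
End Aux.

Theorem lemma4p3 (C : numClosedFieldType) (n : nat) (f : 'I_n.+1 -> C)
    (m : nat) (hm0 : (0 < m)%N) (hmn : (m <= n.+1)%N) :
  \sum_(a : 'I_n.+1) \sum_(b : 'I_n.+1) `|fshift f m a b| ^+ 2
  <= (n.+1)%:R ^+ 2 * Tf f ^+ 2
     + \sum_(1 <= k < m | (k %| n.+1)%N)
         ((m ^ 2 * totient k)%:R / k%:R) * Gf f (n.+1 %/ k).
Proof.
rewrite exchange_big /=.
apply: le_trans (ler_sum _ (fun b _ => @per_b C n f b m)) _.
rewrite big_split /= sumr_const card_ord.
apply: lerD.
  by rewrite -(mulr_natr (n.+1%:R * Tf f ^+ 2)) mulrAC -expr2.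
set v := fun k => (m ^ 2)%:R / k%:R * Gf f (n.+1 %/ k).
rewrite (eq_bigr (fun b : 'I_n.+1 => \sum_(1 <= k < m | (k %| n.+1)%N)
    (if (n.+1 %/ gcdn n.+1 b == k)%N then v k else 0))); last first.
  move=> b _; rewrite big_mkcond /=.
  case: ifP => km.
    rewrite (bigD1_seq (n.+1 %/ gcdn n.+1 b)%N) /=; last first.
    - exact: iota_uniq.
    - by rewrite mem_index_iota km andbT k_gt0.
    rewrite kb_dvd eqxx big1 ?addr0 /v ?div_kb //.
    move=> k ne; rewrite eq_sym (negbTE ne); by case: ifP.
  rewrite big1_seq // => k /andP [_]; rewrite mem_index_iota => /andP [_ lk].
  case: eqP => // e; by case: ifP => //; rewrite e lk in km.
rewrite exchange_big /= big_seq_cond [X in _ <= X]big_seq_cond.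
apply: ler_sum => k /andP [kin kN].
have k1 : (1 <= k)%N by move: kin; rewrite mem_index_iota => /andP [].
rewrite -big_mkcond /= sumr_const.
have v0 : 0 <= v k by rewrite /v mulr_ge0 ?divr_ge0 ?Gf_ge0.
have cle : (#|[pred b : 'I_n.+1 | (n.+1 %/ gcdn n.+1 b)%N == k]| <= totient k)%N.
  clear kin; case: k k1 kN v0 => // k' _ kN _.
  by rewrite -cardsE; apply: count_le.
have eR : (m ^ 2 * totient k)%:R / k%:R * Gf f (n.+1 %/ k) = v k *+ totient k.
  by rewrite -(mulr_natr (v k) (totient k)) /v natrM; ring.
rewrite eR -[X in v k *+ X <= _]/(#|[pred b : 'I_n.+1 | (n.+1 %/ gcdn n.+1 b)%N == k]|).
by rewrite -(subnKC cle) mulrnDr lerDl mulrn_wge0.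
Qed.
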